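(* For all $\mathbf u\in D(\tilde{\mathbf L})$ we have $\operatorname{Re}(\tilde{\mathbf L}\mathbf u,\mathbf u)_{\tilde{\mathcal H}}\le0$.
   Context: Radial functions on $\mathbb B^6_1=\{x\in\mathbb R^6:|x|<1\}$ are identified with their profiles in $\rho=|x|$, and $'$ denotes $\partial_\rho$. $D(\tilde{\mathbf L})=\{\mathbf u=(u_1,u_2)\in C^3(\overline{\mathbb B^6_1})\times C^2(\overline{\mathbb B^6_1}): u_1,u_2\text{ radial}\}$ and \[\tilde{\mathbf L}\mathbf u(\rho)=\begin{pmatrix}-\rho u_1'(\rho)-u_1(\rho)+u_2(\rho)\\ u_1''(\rho)+\frac5\rho u_1'(\rho)-\rho u_2'(\rho)-2u_2(\rho)\end{pmatrix}.\] On $D(\tilde{\mathbf L})$, \[(\mathbf u,\mathbf v)_{\tilde{\mathcal H}}=2\int_0^1u_1''\overline{v_1''}\rho^5d\rho+10\int_0^1u_1'\overline{v_1'}\rho^3d\rho+2\int_0^1u_2'\overline{v_2'}\rho^5d\rho+u_1(1)\overline{v_1(1)}+u_2(1)\overline{v_2(1)}.\] *)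

(* Defs.v *)
From Stdlib Require Import Reals.
From Coquelicot Require Import Coquelicot.
Open Scope R_scope.

Definition CDn (n : nat) (f : R -> C) (x : R) : C :=
  (Derive_n (fun t => Re (f t)) n x, Derive_n (fun t => Im (f t)) n x).

Definition RCk (k : nat) (g : R -> R) : Prop :=
  (forall j, (j < k)%nat -> forall x, ex_derive (Derive_n g j) x) /\
  (forall j, (j <= k)%nat -> forall x, continuous (Derive_n g j) x).

Definition CCk (k : nat) (f : R -> C) : Prop :=
  RCk k (fun t => Re (f t)) /\ RCk k (fun t => Im (f t)).

(* Profile (in rho = |x|) of a radial C^k function on R^6: an even C^k
   function of one real variable. *)
Definition radial_Ck_profile (k : nat) (f : R -> C) : Prop :=
  CCk k f /\ (forall r, f (- r) = f r).

Definition CInt (f : R -> C) (a b : R) : C :=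
  (RInt (fun t => Re (f t)) a b, RInt (fun t => Im (f t)) a b).

Definition Lt1 (u1 u2 : R -> C) : R -> C := fun rho =>
  Cplus (Cplus (Copp (Cmult (RtoC rho) (CDn 1 u1 rho))) (Copp (u1 rho))) (u2 rho).

Definition Lt2 (u1 u2 : R -> C) : R -> C := fun rho =>
  Cplus (Cplus (Cplus (CDn 2 u1 rho) (Cmult (RtoC (5 / rho)) (CDn 1 u1 rho)))
               (Copp (Cmult (RtoC rho) (CDn 1 u2 rho))))
        (Copp (Cmult (RtoC 2) (u2 rho))).

Definition ipH (u1 u2 v1 v2 : R -> C) : C :=
  Cplus (Cplus (Cplus (Cplus
    (Cmult (RtoC 2) (CInt (fun rho =>
       Cmult (Cmult (CDn 2 u1 rho) (Cconj (CDn 2 v1 rho))) (RtoC (rho ^ 5))) 0 1))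
    (Cmult (RtoC 10) (CInt (fun rho =>
       Cmult (Cmult (CDn 1 u1 rho) (Cconj (CDn 1 v1 rho))) (RtoC (rho ^ 3))) 0 1)))
    (Cmult (RtoC 2) (CInt (fun rho =>
       Cmult (Cmult (CDn 1 u2 rho) (Cconj (CDn 1 v2 rho))) (RtoC (rho ^ 5))) 0 1)))
    (Cmult (u1 1) (Cconj (v1 1))))
    (Cmult (u2 1) (Cconj (v2 1))).

(* Main.v *)
Require Import Defs.
From Stdlib Require Import Reals Lra Lia.
From Coquelicot Require Import Coquelicot.
Open Scope R_scope.

Lemma deq (f : R -> R) (x : R) (a b : R) : is_derive f x a -> a = b -> is_derive f x b.
Proof. intros H ->; exact H. Qed.
Lemma dplus (f g : R -> R) (x : R) (a b : R) : is_derive f x a -> is_derive g x b -> is_derive (fun t => f t + g t) x (a + b).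
Proof. intros; apply (is_derive_plus f g x a b); auto. Qed.
Lemma dminus (f g : R -> R) (x : R) (a b : R) : is_derive f x a -> is_derive g x b -> is_derive (fun t => f t - g t) x (a - b).
Proof. intros; apply (is_derive_minus f g x a b); auto. Qed.
Lemma dopp (f : R -> R) (x : R) (a : R) : is_derive f x a -> is_derive (fun t => - f t) x (- a).
Proof. intros; apply (is_derive_opp f x a); auto. Qed.
Lemma dmult (f g : R -> R) (x : R) (a b : R) : is_derive f x a -> is_derive g x b -> is_derive (fun t => f t * g t) x (a * g x + f x * b).
Proof. intros; apply (is_derive_mult f g x a b); auto. intros; apply Rmult_comm. Qed.
Lemma did (x : R) : is_derive (fun t : R => t) x 1.
Proof. apply (is_derive_id x). Qed.
Lemma dconst (c : R) (x : R) : is_derive (fun _ : R => c) x 0.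
Proof. apply (is_derive_const c x). Qed.
Lemma dinv (f : R -> R) (x : R) (a : R) : is_derive f x a -> f x <> 0 -> is_derive (fun t => / f t) x (- a / (f x)^2).
Proof. intros; apply is_derive_inv; auto. Qed.
Lemma dpow (n : nat) (x : R) : is_derive (fun t : R => t ^ n) x (INR n * x ^ pred n).
Proof. eapply deq. { apply (is_derive_pow (fun t => t) n x 1). apply did. } ring. Qed.

Lemma cplus (f g : R -> R) (x : R) : continuous f x -> continuous g x -> continuous (fun t => f t + g t) x.
Proof. intros; apply (continuous_plus f g x); auto. Qed.
Lemma cminus (f g : R -> R) (x : R) : continuous f x -> continuous g x -> continuous (fun t => f t - g t) x.
Proof. intros; apply (continuous_minus f g x); auto. Qed.
Lemma copp (f : R -> R) (x : R) : continuous f x -> continuous (fun t => - f t) x.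
Proof. intros; apply (continuous_opp f x); auto. Qed.
Lemma cmult (f g : R -> R) (x : R) : continuous f x -> continuous g x -> continuous (fun t => f t * g t) x.
Proof. intros; apply (continuous_mult f g x); auto. Qed.
Lemma cid (x : R) : continuous (fun t : R => t) x.
Proof. apply continuous_id. Qed.
Lemma cconst (c : R) (x : R) : continuous (fun _ : R => c) x.
Proof. apply continuous_const. Qed.
Lemma cpow (n : nat) (x : R) : continuous (fun t : R => t ^ n) x.
Proof. apply (ex_derive_continuous (K:=R_AbsRing) (V:=R_NormedModule)). eexists; apply dpow. Qed.
Lemma dRinv (x : R) : x <> 0 -> is_derive Rinv x (- 1 / x ^ 2).
Proof. intro H. eapply deq. { apply (dinv (fun t => t) x 1). apply did. exact H. } reflexivity. Qed.

Definition V1f (p r : R -> R) (t : R) : R := - (t * Derive_n p 1 t) - p t + r t.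
Definition V2f (p r : R -> R) (t : R) : R :=
  Derive_n p 2 t + 5 * / t * Derive_n p 1 t - t * Derive_n r 1 t - 2 * r t.

Definition gA (p r : R -> R) (t : R) : R :=
  (- (3 * Derive_n p 2 t) - t * Derive_n p 3 t + Derive_n r 2 t) * Derive_n p 2 t * t ^ 5.
Definition gB (p r : R -> R) (t : R) : R :=
  (- (2 * Derive_n p 1 t) - t * Derive_n p 2 t + Derive_n r 1 t) * Derive_n p 1 t * t ^ 3.
Definition gC (p r : R -> R) (t : R) : R :=
  (t ^ 5 * Derive_n p 3 t + 5 * t ^ 4 * Derive_n p 2 t - 5 * t ^ 3 * Derive_n p 1 t
   - 3 * t ^ 5 * Derive_n r 1 t - t ^ 6 * Derive_n r 2 t) * Derive_n r 1 t.
Definition Gf (p r : R -> R) (t : R) : R :=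
  - (t ^ 6 * (Derive_n p 2 t * Derive_n p 2 t)) - 5 * (t ^ 4 * (Derive_n p 1 t * Derive_n p 1 t))
  + 2 * (t ^ 5 * (Derive_n p 2 t * Derive_n r 1 t)) - t ^ 6 * (Derive_n r 1 t * Derive_n r 1 t).

Ltac dstep := lazymatch goal with
  | |- is_derive (fun t => @?a t + @?b t) _ _ => apply dplus
  | |- is_derive (fun t => @?a t - @?b t) _ _ => apply dminus
  | |- is_derive (fun t => - @?a t) _ _ => apply dopp
  | |- is_derive (fun t => / @?a t) _ _ => apply dinv
  | |- is_derive Rinv _ _ => apply dRinv; assumption
  | |- is_derive (fun t => @?a t * @?b t) _ _ => apply dmult
  | |- is_derive (fun t => t ^ _) _ _ => apply dpow
  | |- is_derive (fun t => t) _ _ => apply did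
  | |- is_derive (fun _ => _) _ _ => apply dconst
  | |- is_derive (fun t => Derive_n ?f ?k t) _ _ =>
      match goal with H : forall x, is_derive (Derive_n f k) x _ |- _ => apply H end
  | |- is_derive (fun t => ?f t) _ _ =>
      match goal with H : forall x, is_derive (Derive_n f O) x _ |- _ => apply H end
  | |- is_derive (Derive_n ?f ?k) _ _ =>
      match goal with H : forall x, is_derive (Derive_n f k) x _ |- _ => apply H end
  | |- is_derive ?f _ _ =>
      match goal with H : forall x, is_derive (Derive_n f O) x _ |- _ => apply H end
  end.
Ltac dtac := repeat (dstep; cbv beta).
Ltac cstep := lazymatch goal with
  | |- continuous (fun t => @?a t + @?b t) _ => apply cplus
  | |- continuous (fun t => @?a t - @?b t) _ => apply cminus
  | |- continuous (fun t => - @?a t) _ => apply copp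
  | |- continuous (fun t => @?a t * @?b t) _ => apply cmult
  | |- continuous (fun t => t ^ _) _ => apply cpow
  | |- continuous (fun t => t) _ => apply cid
  | |- continuous (fun _ => _) _ => apply cconst
  | |- continuous (fun t => Derive_n ?f ?k t) _ =>
      match goal with H : forall x, continuous (Derive_n f k) x |- _ => apply H end
  | |- continuous (Derive_n ?f ?k) _ =>
      match goal with H : forall x, continuous (Derive_n f k) x |- _ => apply H end
  | |- continuous ?f _ =>
      match goal with H : forall x, continuous f x |- _ => apply H end
  end.
Ltac ctac := repeat (cstep; cbv beta).

Lemma real_part (p r : R -> R) (Hp : RCk 3 p) (Hr : RCk 2 r) :
  let IA := fun t => Derive_n (V1f p r) 2 t * Derive_n p 2 t * t ^ 5 in
  let IB := fun t => Derive_n (V1f p r) 1 t * Derive_n p 1 t * t ^ 3 in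
  let IC := fun t => Derive_n (V2f p r) 1 t * Derive_n r 1 t * t ^ 5 in
  ex_RInt IA 0 1 /\ ex_RInt IB 0 1 /\ ex_RInt IC 0 1 /\
  2 * RInt IA 0 1 + 10 * RInt IB 0 1 + 2 * RInt IC 0 1 =
  - (Derive_n p 2 1) ^ 2 - 5 * (Derive_n p 1 1) ^ 2
  + 2 * Derive_n p 2 1 * Derive_n r 1 1 - (Derive_n r 1 1) ^ 2.
Proof.
  intros IA IB IC.
  destruct Hp as [Hpd Hpc]; destruct Hr as [Hrd Hrc].
  assert (dp0 : forall x, is_derive (Derive_n p 0) x (Derive_n p 1 x))
    by (intro x; exact (Derive_correct _ _ (Hpd 0%nat ltac:(lia) x))).
  assert (dp1 : forall x, is_derive (Derive_n p 1) x (Derive_n p 2 x))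
    by (intro x; exact (Derive_correct _ _ (Hpd 1%nat ltac:(lia) x))).
  assert (dp2 : forall x, is_derive (Derive_n p 2) x (Derive_n p 3 x))
    by (intro x; exact (Derive_correct _ _ (Hpd 2%nat ltac:(lia) x))).
  assert (dr0 : forall x, is_derive (Derive_n r 0) x (Derive_n r 1 x))
    by (intro x; exact (Derive_correct _ _ (Hrd 0%nat ltac:(lia) x))).
  assert (dr1 : forall x, is_derive (Derive_n r 1) x (Derive_n r 2 x))
    by (intro x; exact (Derive_correct _ _ (Hrd 1%nat ltac:(lia) x))).
  assert (cp1 : forall x, continuous (Derive_n p 1) x) by (intro; apply Hpc; lia).
  assert (cp2 : forall x, continuous (Derive_n p 2) x) by (intro; apply Hpc; lia).
  assert (cp3 : forall x, continuous (Derive_n p 3) x) by (intro; apply Hpc; lia).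
  assert (cr1 : forall x, continuous (Derive_n r 1) x) by (intro; apply Hrc; lia).
  assert (cr2 : forall x, continuous (Derive_n r 2) x) by (intro; apply Hrc; lia).
  assert (E1 : forall t, Derive_n (V1f p r) 1 t =
     - (Derive_n p 1 t + t * Derive_n p 2 t) - Derive_n p 1 t + Derive_n r 1 t).
  { intro t. apply is_derive_unique.
    unfold V1f. eapply deq. dtac. cbv beta; ring. }
  assert (E2 : forall t, Derive_n (V1f p r) 2 t =
     - (Derive_n p 2 t + (Derive_n p 2 t + t * Derive_n p 3 t)) - Derive_n p 2 t + Derive_n r 2 t).
  { intro t. transitivity (Derive (Derive_n (V1f p r) 1) t); [reflexivity|].
    rewrite (Derive_ext _ _ t E1). apply is_derive_unique.
    eapply deq. dtac. cbv beta; ring. }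
  assert (E3 : forall t, t <> 0 -> Derive_n (V2f p r) 1 t =
     Derive_n p 3 t + (5 * (- 1 / t ^ 2) * Derive_n p 1 t + 5 * / t * Derive_n p 2 t)
     - (Derive_n r 1 t + t * Derive_n r 2 t) - 2 * Derive_n r 1 t).
  { intros t Ht. apply is_derive_unique. unfold V2f.
    eapply deq. dtac. cbv beta; field. exact Ht. }
  assert (QA : forall t, IA t = gA p r t).
  { intro t. unfold IA, gA. rewrite E2. ring. }
  assert (QB : forall t, IB t = gB p r t).
  { intro t. unfold IB, gB. rewrite E1. ring. }
  assert (QC : forall t, 0 < t -> IC t = gC p r t).
  { intros t Ht. unfold IC, gC. rewrite E3 by lra. field. lra. }
  assert (CA : forall x, continuous (gA p r) x) by (intro; unfold gA; ctac).
  assert (CB : forall x, continuous (gB p r) x) by (intro; unfold gB; ctac).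
  assert (CC : forall x, continuous (gC p r) x) by (intro; unfold gC; ctac).
  assert (DG : forall x, is_derive (Gf p r) x (2 * gA p r x + 10 * gB p r x + 2 * gC p r x)).
  { intro x. unfold Gf. eapply deq. dtac. unfold gA, gB, gC. cbv beta. simpl INR. simpl pred. ring. }
  assert (ICG : is_RInt (fun x => 2 * gA p r x + 10 * gB p r x + 2 * gC p r x) 0 1 (minus (Gf p r 1) (Gf p r 0))).
  { apply (is_RInt_derive (V:=R_CompleteNormedModule) (Gf p r)). intros; apply DG. intros; ctac. }
  assert (XA : ex_RInt (gA p r) 0 1) by (apply (ex_RInt_continuous (V:=R_CompleteNormedModule)); intros; apply CA).
  assert (XB : ex_RInt (gB p r) 0 1) by (apply (ex_RInt_continuous (V:=R_CompleteNormedModule)); intros; apply CB).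
  assert (XC : ex_RInt (gC p r) 0 1) by (apply (ex_RInt_continuous (V:=R_CompleteNormedModule)); intros; apply CC).
  assert (ISum : is_RInt (fun x => 2 * gA p r x + 10 * gB p r x + 2 * gC p r x) 0 1
      (2 * RInt (gA p r) 0 1 + 10 * RInt (gB p r) 0 1 + 2 * RInt (gC p r) 0 1)).
  { exact (is_RInt_plus _ _ 0 1 _ _
      (is_RInt_plus _ _ 0 1 _ _ (is_RInt_scal _ 0 1 2 _ (RInt_correct _ 0 1 XA))
                                (is_RInt_scal _ 0 1 10 _ (RInt_correct _ 0 1 XB)))
      (is_RInt_scal _ 0 1 2 _ (RInt_correct _ 0 1 XC))). }
  assert (RA : RInt IA 0 1 = RInt (gA p r) 0 1) by (apply RInt_ext; intros; apply QA).
  assert (RB : RInt IB 0 1 = RInt (gB p r) 0 1) by (apply RInt_ext; intros; apply QB).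
  assert (RC : RInt IC 0 1 = RInt (gC p r) 0 1).
  { apply RInt_ext. intros x Hx. rewrite Rmin_left in Hx by lra. apply QC; lra. }
  split; [|split; [|split]].
  - apply (ex_RInt_ext (gA p r)). intros; symmetry; apply QA. exact XA.
  - apply (ex_RInt_ext (gB p r)). intros; symmetry; apply QB. exact XB.
  - apply (ex_RInt_ext (gC p r)). intros x Hx. rewrite Rmin_left in Hx by lra.
    symmetry; apply QC; lra. exact XC.
  - rewrite RA, RB, RC.
    pose proof (is_RInt_unique _ _ _ _ ICG) as U1.
    pose proof (is_RInt_unique _ _ _ _ ISum) as U2.
    rewrite U2 in U1. rewrite U1. unfold minus, plus, opp; simpl. unfold Gf. simpl. ring.
Qed.

Lemma quad a b c d e :
  - c ^ 2 - 5 * b ^ 2 + 2 * c * e - e ^ 2 + (- b - a + d) * a + (c + 5 * b - e - 2 * d) * d <= 0.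
Proof.
  pose proof (Rle_0_sqr (c - e - d / 2)). pose proof (Rle_0_sqr (a + b / 2 - d / 2)).
  pose proof (Rle_0_sqr (b - 9 / 19 * d)). pose proof (Rle_0_sqr d). unfold Rsqr in *. nra.
Qed.

Lemma Re_plus (a b : C) : Re (Cplus a b) = Re a + Re b.
Proof. reflexivity. Qed.
Lemma Re_sc (c : R) (F : R -> C) : Re (Cmult (RtoC c) (CInt F 0 1)) = c * RInt (fun t => Re (F t)) 0 1.
Proof. unfold Cmult, RtoC, CInt; simpl. ring. Qed.
Lemma Re_mc (a b : C) : Re (Cmult a (Cconj b)) = Re a * Re b + Im a * Im b.
Proof. destruct a, b; unfold Cmult, Cconj; simpl. ring. Qed.
Lemma Re_int (a b : C) (c : R) : Re (Cmult (Cmult a (Cconj b)) (RtoC c)) = (Re a * Re b + Im a * Im b) * c.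
Proof. destruct a, b; unfold Cmult, Cconj, RtoC; simpl. ring. Qed.

Theorem mainTheorem7 (u1 u2 : R -> C)
  (Hu1 : radial_Ck_profile 3 u1) (Hu2 : radial_Ck_profile 2 u2) :
  Re (ipH (Lt1 u1 u2) (Lt2 u1 u2) u1 u2) <= 0.
Proof.
  destruct Hu1 as [[Hp Hq] _]. destruct Hu2 as [[Hr Hs] _].
  set (p := fun t => Re (u1 t)) in *. set (q := fun t => Im (u1 t)) in *.
  set (r := fun t => Re (u2 t)) in *. set (s := fun t => Im (u2 t)) in *.
  assert (L1re : forall t, Re (Lt1 u1 u2 t) = V1f p r t).
  { intro t. unfold Lt1, V1f, CDn, Cplus, Copp, Cmult, RtoC, p, q, r, s, Re, Im; simpl. ring. }
  assert (L1im : forall t, Im (Lt1 u1 u2 t) = V1f q s t).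
  { intro t. unfold Lt1, V1f, CDn, Cplus, Copp, Cmult, RtoC, p, q, r, s, Re, Im; simpl. ring. }
  assert (L2re : forall t, Re (Lt2 u1 u2 t) = V2f p r t).
  { intro t. unfold Lt2, V2f, CDn, Cplus, Copp, Cmult, RtoC, p, q, r, s, Re, Im; simpl. unfold Rdiv. ring. }
  assert (L2im : forall t, Im (Lt2 u1 u2 t) = V2f q s t).
  { intro t. unfold Lt2, V2f, CDn, Cplus, Copp, Cmult, RtoC, p, q, r, s, Re, Im; simpl. unfold Rdiv. ring. }
  pose proof (real_part p r Hp Hr) as Hpr; cbv zeta in Hpr.
  destruct Hpr as (XAp & XBp & XCp & Ep).
  pose proof (real_part q s Hq Hs) as Hqs; cbv zeta in Hqs.
  destruct Hqs as (XAq & XBq & XCq & Eq).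
  unfold ipH. rewrite !Re_plus, !Re_sc, !Re_mc.
  assert (KA : RInt (fun t => Re (Cmult (Cmult (CDn 2 (Lt1 u1 u2) t) (Cconj (CDn 2 u1 t))) (RtoC (t ^ 5)))) 0 1
     = RInt (fun t : R => Derive_n (V1f p r) 2 t * Derive_n p 2 t * t ^ 5) 0 1
     + RInt (fun t : R => Derive_n (V1f q s) 2 t * Derive_n q 2 t * t ^ 5) 0 1).
  { etransitivity; [|exact (RInt_plus _ _ _ _ XAp XAq)]. apply RInt_ext. intros x _.
    rewrite Re_int. unfold CDn; simpl fst; simpl snd.
    rewrite (Derive_n_ext _ _ 2 x L1re), (Derive_n_ext _ _ 2 x L1im).
    unfold p, q, r, s, plus; simpl. ring. }
  assert (KB : RInt (fun t => Re (Cmult (Cmult (CDn 1 (Lt1 u1 u2) t) (Cconj (CDn 1 u1 t))) (RtoC (t ^ 3)))) 0 1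
     = RInt (fun t : R => Derive_n (V1f p r) 1 t * Derive_n p 1 t * t ^ 3) 0 1
     + RInt (fun t : R => Derive_n (V1f q s) 1 t * Derive_n q 1 t * t ^ 3) 0 1).
  { etransitivity; [|exact (RInt_plus _ _ _ _ XBp XBq)]. apply RInt_ext. intros x _.
    rewrite Re_int. unfold CDn; simpl fst; simpl snd.
    rewrite (Derive_n_ext _ _ 1 x L1re), (Derive_n_ext _ _ 1 x L1im).
    unfold p, q, r, s, plus; simpl. ring. }
  assert (KC : RInt (fun t => Re (Cmult (Cmult (CDn 1 (Lt2 u1 u2) t) (Cconj (CDn 1 u2 t))) (RtoC (t ^ 5)))) 0 1
     = RInt (fun t : R => Derive_n (V2f p r) 1 t * Derive_n r 1 t * t ^ 5) 0 1
     + RInt (fun t : R => Derive_n (V2f q s) 1 t * Derive_n s 1 t * t ^ 5) 0 1).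
  { etransitivity; [|exact (RInt_plus _ _ _ _ XCp XCq)]. apply RInt_ext. intros x _.
    rewrite Re_int. unfold CDn; simpl fst; simpl snd.
    rewrite (Derive_n_ext _ _ 1 x L2re), (Derive_n_ext _ _ 1 x L2im).
    unfold p, q, r, s, plus; simpl. ring. }
  rewrite KA, KB, KC, L1re, L1im, L2re, L2im.
  assert (W1 : forall a b, V1f a b 1 = - Derive_n a 1 1 - a 1 + b 1) by (intros; unfold V1f; ring).
  assert (W2 : forall a b, V2f a b 1 = Derive_n a 2 1 + 5 * Derive_n a 1 1 - Derive_n b 1 1 - 2 * b 1)
    by (intros; unfold V2f; rewrite Rinv_1; ring).
  rewrite !W1, !W2.
  pose proof (quad (p 1) (Derive_n p 1 1) (Derive_n p 2 1) (r 1) (Derive_n r 1 1)) as Q1.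
  pose proof (quad (q 1) (Derive_n q 1 1) (Derive_n q 2 1) (s 1) (Derive_n s 1 1)) as Q2.
  change (Re (u1 1)) with (p 1). change (Im (u1 1)) with (q 1).
  change (Re (u2 1)) with (r 1). change (Im (u2 1)) with (s 1).
  lra.
Qed.
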